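(* Let $\Gamma$ be a finitely generated group which is stable and LEF, let $\pi:\mathbb{F}\twoheadrightarrow\Gamma$ be an epimorphism from a free group on a finite basis $X$, and let $S=\pi(X)$. Then $\Gamma$ is residually finite and for every positive integer $l$, $$\max\big\{\mathcal{L}_\Gamma^S\big(F_\Gamma^\pi(2l)\big)!,\ \mathcal{L}_\Gamma^S(l)!\big\}\ge\mathcal{R}_\Gamma^S(l).$$
   Context: For finite $\Omega$, $d_\Omega(\sigma,\tau)=|\{\omega:\sigma(\omega)\ne\tau(\omega)\}|/|\Omega|$. A pair $(\delta,E)$, $\delta\in(0,1]$, $E\subseteq\ker\pi$ finite, is valid for $\epsilon>0$ if for every finite $\Omega$ and homomorphism $\rho:\mathbb{F}\to\mathrm{Sym}(\Omega)$ with $d_\Omega(\rho(r),\mathrm{id})<\delta$ for all $r\in E$ there is a homomorphism $\phi:\Gamma\to\mathrm{Sym}(\Omega)$ with $d_\Omega(\rho(x),\phi(\pi(x)))<\epsilon$ for all $x\in X$; $\Gamma$ is stable if valid pairs exist for all $\epsilon$. $F_\Gamma^\pi(x)=\inf\{\|E\|/\delta:(\delta,E)\text{ valid for }1/x\}$, $\|E\|=\sum_{r\in E}|r|$ (word length in $X$). $B_S(t)$ is the closed ball of radius $t\ge0$ about $e$ in the word metric of $S$. A map $\psi:A\to\Delta$ from a subset $A$ of a group is a local embedding if it is injective and $\psi(gh)=\psi(g)\psi(h)$ whenever $g,h,gh\in A$. $\Gamma$ is LEF if every finite subset admits a local embedding into a finite group. $\mathcal{L}_\Gamma^S(t)$ is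 the minimal order of a finite group admitting a local embedding of $B_S(t)$. $\mathcal{R}_\Gamma^S(l)$ is the minimal order of a finite group $\Delta$ admitting a homomorphism $\Gamma\to\Delta$ injective on $B_S(l)$. *)

(* Defs.v *)
From HB Require Import structures.
From mathcomp Require Import all_boot all_order all_algebra all_fingroup.
From mathcomp Require Import boolp classical_sets reals.

Set Implicit Arguments. Unset Strict Implicit. Unset Printing Implicit Defensive.
Import Order.TTheory GRing.Theory Num.Theory.

(* A word over the finite basis X: a letter (x, true) stands for x,
   (x, false) for x^-1.  Elements of the free group F(X) are represented by
   their unique reduced words. *)
Definition word (X : finType) := seq (X * bool).

Definition reduced (X : finType) (w : word X) : bool :=
  ~~ has (fun p : (X * bool) * (X * bool) => (p.1.1 == p.2.1) && (p.1.2 != p.2.2))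
        (zip w (behead w)).

Definition eval_word (X : finType) (G : groupType) (s : X -> G) (w : word X) : G :=
  foldr (fun a acc => ((if a.2 then s a.1 else (s a.1)^-1) * acc)%g) 1%g w.

(* pi : F(X) -> G (determined by s) is onto *)
Definition word_surjective (X : finType) (G : groupType) (s : X -> G) : Prop :=
  forall g : G, exists w : word X, eval_word s w = g.

Definition dOmega (R : realType) (Om : finType) (sg tau : {perm Om}) : R :=
  (#|[set w | sg w != tau w]|%:R / #|Om|%:R)%R.

Definition group_hom (G H : groupType) (f : G -> H) : Prop :=
  forall x y : G, f (x * y)%g = (f x * f y)%g.

Definition normE (X : finType) (E : seq (word X)) : nat := \sum_(r <- E) size r.

(* (delta, E) is valid for eps; E is a finite subset of ker pi (reduced words,
   listed without repetition); rho : F(X) -> Sym(Omega) is given by the images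
   of the basis. *)
Definition valid_pair (R : realType) (X : finType) (G : groupType) (s : X -> G)
    (eps delta : R) (E : seq (word X)) : Prop :=
  [/\ (0 < delta <= 1)%R, uniq E, all (@reduced X) E,
      (forall r, r \in E -> eval_word s r = 1%g) &
      forall (Om : finType) (rho : X -> {perm Om}),
        (forall r, r \in E -> (dOmega R (eval_word rho r) 1%g < delta)%R) ->
        exists phi : G -> {perm Om}, group_hom phi /\
          forall x : X, (dOmega R (rho x) (phi (s x)) < eps)%R].

Definition stable (R : realType) (X : finType) (G : groupType) (s : X -> G) : Prop :=
  forall eps : R, (0 < eps)%R -> exists delta E, valid_pair s eps delta E.

Definition Fstab (R : realType) (X : finType) (G : groupType) (s : X -> G) (x : R) : R :=
  inf [set q : R | exists delta E, valid_pair s (x^-1)%R delta E /\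
                                  q = ((normE E)%:R / delta)%R].

Definition ball (R : realType) (X : finType) (G : groupType) (s : X -> G) (t : R)
  : G -> Prop :=
  fun g => exists w : word X, eval_word s w = g /\ ((size w)%:R <= t)%R.

Definition local_embedding (G H : groupType) (A : G -> Prop) (psi : G -> H) : Prop :=
  (forall g h, A g -> A h -> psi g = psi h -> g = h) /\
  (forall g h, A g -> A h -> A (g * h)%g -> psi (g * h)%g = (psi g * psi h)%g).

Definition finite_subset (G : groupType) (A : G -> Prop) : Prop :=
  exists l : seq G, forall g, A g -> g \in l.

Definition LEF (G : groupType) : Prop :=
  forall A : G -> Prop, finite_subset A ->
    exists (H : finGroupType) (psi : G -> H), local_embedding A psi.

Definition residually_finite (G : groupType) : Prop :=
  forall g : G, g != 1%g ->
    exists (H : finGroupType) (f : G -> H), group_hom f /\ f g != 1%g.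

(* least natural number satisfying P (0 if there is none) *)
Lemma min_nat_ex (P : nat -> Prop) : (exists n, P n) -> exists n, `[< P n >].
Proof. by case=> n Pn; exists n; apply/asboolP. Qed.

Definition min_nat (P : nat -> Prop) : nat :=
  match pselect (exists n, P n) with
  | left h => ex_minn (min_nat_ex h)
  | right _ => 0
  end.

Definition Lfun (R : realType) (X : finType) (G : groupType) (s : X -> G) (t : R) : nat :=
  min_nat (fun n => exists (H : finGroupType) (psi : G -> H),
             #|H| = n /\ local_embedding (ball s t) psi).

Definition Rfun (R : realType) (X : finType) (G : groupType) (s : X -> G) (l : nat) : nat :=
  min_nat (fun n => exists (H : finGroupType) (f : G -> H),
             [/\ #|H| = n, group_hom f &
                 forall g h, ball s (l%:R : R) g -> ball s (l%:R : R) h -> f g = f h -> g = h]).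

(* Main.v *)
Require Import Defs.
From HB Require Import structures.
From mathcomp Require Import all_boot all_order all_algebra all_fingroup.
From mathcomp Require Import boolp classical_sets reals.
Import Order.TTheory GRing.Theory Num.Theory.

Lemma min_natP {P : nat -> Prop} : (exists n, P n) -> P (min_nat P).
Proof. rewrite /min_nat; case: pselect => // h _; case: ex_minnP => n /asboolP. done. Qed.

Lemma min_nat_le {P : nat -> Prop} {n} : P n -> (min_nat P <= n)%N.
Proof.
move=> Pn; rewrite /min_nat; case: pselect => [h|[]]; last by exists n.
case: ex_minnP => m _ /(_ n); apply; exact/asboolP.
Qed.

Fixpoint words (X : finType) (n : nat) : seq (word X) :=
  if n is k.+1 then [::] :: [seq a :: w | a <- enum {: X * bool}, w <- words X k]
  else [:: [::]].

Lemma words_mem (X : finType) n (w : word X) : (size w <= n)%N -> w \in words X n.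
Proof.
elim: n w => [|n IH] [|a w] //=; rewrite ?in_cons ?eqxx //.
move=> H; apply/orP; right; apply: (allpairs_f (fun a w => a :: w)).
  by rewrite mem_enum.
exact: IH.
Qed.

Lemma finite_ball (R : realType) (X : finType) (G : groupType) (s : X -> G) (t : R) :
  finite_subset (ball s t).
Proof.
exists [seq eval_word s w | w <- words X (Num.trunc t).+1].
move=> g [w [<- hw]]; apply: map_f; apply: words_mem.
apply: ltnW; rewrite -(ltr_nat R); exact: le_lt_trans hw (truncnS_gt t).
Qed.

Lemma ball_word (R : realType) (X : finType) (G : groupType) (s : X -> G) (t : R) w :
  ((size w)%:R <= t)%R -> ball s t (eval_word s w).
Proof. by move=> h; exists w. Qed.

Lemma ball_mono (R : realType) (X : finType) (G : groupType) (s : X -> G) (t t' : R) g :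
  (t <= t')%R -> ball s t g -> ball s t' g.
Proof. by move=> h [w [e hw]]; exists w; split => //; apply: le_trans h. Qed.

Lemma hom1 (G H : groupType) (f : G -> H) : group_hom f -> f 1%g = 1%g.
Proof.
move=> hf; apply: (@mulIg _ (f 1%g)); rewrite -hf !mulg1 mul1g //.
Qed.

Lemma homV (G H : groupType) (f : G -> H) x : group_hom f -> f (x^-1)%g = ((f x)^-1)%g.
Proof.
move=> hf; apply/esym/mulg1_eq; rewrite -hf mulgV; exact: hom1.
Qed.

Lemma hom_eval (X : finType) (G H : groupType) (s : X -> G) (f : G -> H) w :
  group_hom f -> eval_word (fun x => f (s x)) w = f (eval_word s w).
Proof.
move=> hf; elim: w => [|a w IH] /=; first by rewrite hom1.
by rewrite hf IH; case: a.2 => //; rewrite homV.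
Qed.
Arguments hom_eval {X G H s f} w hf.

Definition cnt {Om : finType} (p q : {perm Om}) := #|[set w | p w != q w]|.

Lemma cnt_sym (Om : finType) (p q : {perm Om}) : cnt p q = cnt q p.
Proof. by apply: eq_card => w; rewrite !inE eq_sym. Qed.

Lemma cnt_tri (Om : finType) (p q r : {perm Om}) : (cnt p r <= cnt p q + cnt q r)%N.
Proof.
rewrite /cnt; apply: leq_trans (_ : #|[set w | p w != q w] :|: [set w | q w != r w]| <= _)%N.
  apply: subset_leq_card; apply/fintype.subsetP => w; rewrite !inE.
  by case: (p w =P q w) => [->|]//=.
by rewrite -cardsUI leq_addr.
Qed.

Lemma cnt_mul (Om : finType) (p1 p2 q1 q2 : {perm Om}) :
  (cnt (p1 * p2)%g (q1 * q2)%g <= cnt p1 q1 + cnt p2 q2)%N.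
Proof.
rewrite /cnt; apply: leq_trans (_ : #|[set w | p1 w != q1 w] :|: (p1 @^-1: [set w | p2 w != q2 w])| <= _)%N.
  apply: subset_leq_card; apply/fintype.subsetP => w; rewrite !inE !permM. idtac.
  idtac;   by case: (p1 w =P q1 w) => [->|] //=; rewrite ?orbT.
by rewrite -[X in (_ <= _ + X)%N](card_preimset _ (@perm_inj _ p1)) -cardsUI leq_addr.
Qed.

Lemma cnt_inv (Om : finType) (p q : {perm Om}) : cnt (p^-1)%g (q^-1)%g = cnt p q.
Proof.
rewrite /cnt -[RHS](card_preimset _ (@perm_inj _ (p^-1)%g)); apply: eq_card => w.
rewrite !inE permKV; congr negb; apply/eqP/eqP => h.
  by rewrite h permKV.
by rewrite {2}h permK.
Qed.

Lemma cnt_word (X : finType) (Om : finType) (rho tau : X -> {perm Om}) M :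
  (forall x, cnt (rho x) (tau x) <= M)%N ->
  forall w : word X, (cnt (eval_word rho w) (eval_word tau w) <= size w * M)%N.
Proof.
move=> hM; elim => [|a w IH] /=.
  by rewrite /cnt (_ : [set _ | _] = finset.set0) ?finset.cards0 //; apply/setP => x; rewrite !inE eqxx.
apply: (leq_trans (cnt_mul _ _ _ _ _)); rewrite mulSn leq_add //.
by case: a.2; rewrite ?cnt_inv.
Qed.

Definition rp {H : finGroupType} (h : H) : {perm H} := perm (@mulIg H h).

Lemma rpE (H : finGroupType) (h x : H) : rp h x = (x * h)%g.
Proof. by rewrite permE. Qed.

Lemma rpM (H : finGroupType) (a b : H) : rp (a * b)%g = (rp a * rp b)%g.
Proof. by apply/permP => x; rewrite permM !rpE mulgA. Qed.

Lemma rp1 (H : finGroupType) : rp (1 : H)%g = 1%g.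
Proof. by apply/permP => x; rewrite rpE perm1 mulg1. Qed.

Lemma rpV (H : finGroupType) (a : H) : rp (a^-1)%g = ((rp a)^-1)%g.
Proof. by apply/esym/mulg1_eq; rewrite -rpM mulgV rp1. Qed.

Lemma cnt_rp {H : finGroupType} {a b : H} : a != b -> cnt (rp a) (rp b) = #|H|.
Proof.
move=> hab; rewrite /cnt -cardsT; apply: eq_card => x; rewrite !inE !rpE.
by apply/negP => /eqP /mulgI /eqP; rewrite (negbTE hab).
Qed.


Lemma ball1 {R : realType} {X : finType} {G : groupType} {s : X -> G} {t : R} (t0 : (0 <= t)%R) : ball s t 1%g.
Proof. by exists [::]; split => //; rewrite /= (_ : 0%:R = 0)%R. Qed.

Lemma psi1 {R : realType} {X : finType} {G : groupType} {s : X -> G} {t : R} {H : finGroupType} {psi : G -> H} (hpsi : local_embedding (ball s t) psi) (t0 : (0 <= t)%R) : psi 1%g = 1%g.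
Proof.
have := hpsi.2 _ _ (ball1 t0) (ball1 t0); rewrite mulg1 => /(_ (ball1 t0)) h.
by apply: (@mulIg _ (psi 1%g)); rewrite -h mul1g.
Qed.

Lemma ball_letter {R : realType} {X : finType} {G : groupType} {s : X -> G} {t : R} x b : (1 <= t)%R -> ball s t (if b then s x else (s x)^-1)%g.
Proof.
move=> h; have := @ball_word R X G s t [:: (x, b)]; rewrite /= mulg1; apply.
by rewrite (_ : 1%:R = 1)%R.
Qed.

Lemma eval_rho {R : realType} {X : finType} {G : groupType} {s : X -> G} {t : R} {H : finGroupType} {psi : G -> H} (hpsi : local_embedding (ball s t) psi) (t0 : (0 <= t)%R) (w : word X) : ((size w)%:R <= t)%R ->
  eval_word (fun x => rp (psi (s x))) w = rp (psi (eval_word s w)).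
Proof.
elim: w => [|a w IH] /=; first by rewrite (psi1 hpsi t0) rp1.
move=> hs.
have hw : ((size w)%:R <= t)%R by apply: le_trans hs; rewrite ler_nat.
have h1 : (1 <= t)%R by apply: le_trans hs; rewrite (_ : 1 = 1%:R)%R // ler_nat.
rewrite IH //.
set l := (if a.2 then s a.1 else (s a.1)^-1)%g.
have bl : ball s t l by exact: ball_letter.
have -> : (if a.2 then rp (psi (s a.1)) else (rp (psi (s a.1)))^-1)%g = rp (psi l).
  rewrite /l; case: a.2 => //; rewrite -rpV; congr rp.
  apply: mulg1_eq; rewrite -hpsi.2 ?mulgV ?(psi1 hpsi t0) //; last exact: ball1 t0.
    exact: (ball_letter _ true).
  exact: (ball_letter _ false).
rewrite -rpM -hpsi.2 //; first exact: (@ball_word R X G s t w).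
exact: (@ball_word R X G s t (a :: w)).
Qed.

Lemma card_fg_gt0 (H : finGroupType) : (0 < #|H|)%N.
Proof. by apply/card_gt0P; exists 1%g. Qed.

Lemma core (R : realType) (X : finType) (G : groupType) (s : X -> G)
  (eps delta : R) (E : seq (word X)) (t : R) (H : finGroupType) (psi : G -> H) :
  (0 < eps)%R -> (0 < delta)%R -> (0 <= t)%R ->
  (forall r, r \in E -> eval_word s r = 1%g) ->
  (forall (Om : finType) (rho : X -> {perm Om}),
     (forall r, r \in E -> (dOmega R (eval_word rho r) 1%g < delta)%R) ->
     exists phi : G -> {perm Om}, group_hom phi /\
       forall x, (dOmega R (rho x) (phi (s x)) < eps)%R) ->
  (forall r, r \in E -> ((size r)%:R <= t)%R) ->
  local_embedding (ball s t) psi ->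
  exists phi : G -> {perm H}, group_hom phi /\
    forall u v : word X, ((size u)%:R <= t)%R -> ((size v)%:R <= t)%R ->
      psi (eval_word s u) != psi (eval_word s v) ->
      ((size u + size v)%:R * eps <= 1)%R ->
      phi (eval_word s u) != phi (eval_word s v).
Proof.
move=> eps0 delta0 tge0 hE hvalid hEt hpsi.
pose rho := fun x => rp (psi (s x)).
have hrho : forall r, r \in E -> (dOmega R (eval_word rho r) 1%g < delta)%R.
  move=> r rE; rewrite (eval_rho hpsi tge0 r (hEt r rE)) hE // (psi1 hpsi tge0) rp1.
  rewrite /dOmega (_ : [set _ | _] = finset.set0) ?finset.cards0 ?mul0r //.
  by apply/setP => x; rewrite !inE eqxx.
have [phi [hphi hclose]] := hvalid H rho hrho.
exists phi; split => // u v hu hv hne hk; apply/eqP => heq.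
pose M := (\max_(x : X) cnt (rho x) (phi (s x)))%N.
have hM : forall x, (cnt (rho x) (phi (s x)) <= M)%N.
  by move=> x; rewrite /M (bigD1 x) //= leq_maxl.
have H0 : (0 < #|H|%:R :> R)%R by rewrite ltr0n card_fg_gt0.
have hMr : (M%:R < eps * #|H|%:R)%R.
  rewrite /M; elim/big_ind: _ => //.
  - by rewrite mulr_gt0.
  - by move=> a b ha hb; rewrite /maxn; case: ifP.
  - by move=> x _; have := hclose x; rewrite /dOmega ltr_pdivrMr.
have key : (#|H| <= (size u + size v) * M)%N.
  rewrite -(cnt_rp hne) -(eval_rho hpsi tge0 u hu) -(eval_rho hpsi tge0 v hv).
  apply: (leq_trans (cnt_tri _ _ (phi (eval_word s u)) _)).
  rewrite mulnDl; apply: leq_add.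
    by rewrite -(hom_eval _ hphi); apply: cnt_word.
  by rewrite heq cnt_sym -(hom_eval _ hphi); apply: cnt_word.
move: key hk; case: (size u + size v)%N => [|k].
  by rewrite mul0n leqNgt card_fg_gt0.
move=> key hk.
have : (#|H|%:R <= k.+1%:R * M%:R :> R)%R by rewrite -natrM ler_nat.
move=> h1.
have : (k.+1%:R * M%:R < k.+1%:R * (eps * #|H|%:R) :> R)%R.
  by rewrite ltr_pM2l // ltr0n.
rewrite mulrA => h2.
have h3 : (k.+1%:R * eps * #|H|%:R <= #|H|%:R :> R)%R.
  by rewrite -[X in (_ <= X)%R]mul1r ler_pM2r.
have := lt_le_trans (le_lt_trans h1 h2) h3.
by rewrite ltxx.
Qed.


Arguments finite_ball {R X G} s t.
Arguments ball1 {R X G s t} t0.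
Arguments core {R X G s eps delta E t H psi}.
Arguments hom1 {G H f}.
Lemma size_normE {X : finType} {E : seq (word X)} {r} : r \in E -> (size r <= normE E)%N.
Proof. by move=> rE; rewrite /normE (big_rem r) //= leq_addr. Qed.

Lemma card_permT (H : finType) : #|{perm H}| = (#|H|)`!.
Proof.
rewrite -cardsT -card_perm; apply: eq_card => u; rewrite !inE.
by apply/esym/fintype.subsetP => x _; rewrite inE.
Qed.

Theorem proposition2p14 (R : realType) (X : finType) (G : groupType) (s : X -> G) :
  word_surjective s -> stable R s -> LEF G ->
  residually_finite G /\
  forall l : nat, 0 < l ->
    Rfun R s l <= maxn (Lfun s (Fstab s ((2 * l)%:R : R)))`! (Lfun s (l%:R : R))`!.
Proof.
move=> hsurj hstab hlef; split.
  move=> g gne1; have [w hw] := hsurj g.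
  have n0 : (0 < size w)%N by case: w hw => [/= h|//]; rewrite -h eqxx in gne1.
  have eps0 : (0 < ((size w)%:R : R)^-1)%R by rewrite invr_gt0 ltr0n.
  have [delta [E [/andP [hd0 hd1] huniq hred hE hval]]] := hstab _ eps0.
  pose t := ((size w + normE E)%:R : R)%R.
  have [H [psi hpsi]] := hlef (ball s t) (finite_ball s t).
  have hEt : forall r, r \in E -> ((size r)%:R <= t)%R.
    by move=> r rE; rewrite ler_nat (leq_trans (size_normE rE)) // leq_addl.
  have [phi [hphi hsep]] := core eps0 hd0 (ler0n _ _) hE hval hEt hpsi.
  exists (perm_of H), phi; split => //.
  have := hsep w [::]; rewrite /= hw (hom1 hphi); apply.
  - by rewrite ler_nat leq_addr.
  - by rewrite ler0n.
  - apply/eqP => h; move/eqP: gne1; apply.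
    apply: hpsi.1 h; first by exists w; split => //; rewrite ler_nat leq_addr.
    exact: ball1 (ler0n _ _).
  - by rewrite addn0 mulfV // pnatr_eq0 -lt0n.
move=> l l0.
set x := ((2 * l)%:R : R)%R.
have x0 : (0 < x)%R by rewrite ltr0n muln_gt0.
have eps0 : (0 < x^-1)%R by rewrite invr_gt0.
pose P := fun m => exists delta E, valid_pair s x^-1 delta E /\ normE E = m.
have exP : exists m, P m.
  by have [delta [E hv]] := hstab _ eps0; exists (normE E), delta, E.
have [d0 [E0 [[/andP [hd0 hd1] _ _ hE0 hval0] hn0]]] := min_natP exP.
have hF : ((min_nat P)%:R <= Fstab s x)%R.
  apply: lb_le_inf.
    have [delta [E hv]] := hstab _ eps0.
    by exists ((normE E)%:R / delta)%R, delta, E.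
  move=> q [d [E [hv ->]]].
  have hle := min_nat_le (ex_intro _ d (ex_intro _ E (conj hv erefl)) : P (normE E)).
  case: hv => /andP [hd hd1'] _ _ _ _.
  apply: (le_trans (y := (normE E)%:R%R)); first by rewrite ler_nat.
  by rewrite ler_pdivlMr // ler_piMr.
pose t0 := Num.max (Fstab s x) (l%:R : R)%R.
have t0ge : (0 <= t0)%R by rewrite le_max ler0n orbT.
have ht0F : (Fstab s x <= t0)%R by rewrite le_max lexx.
have ht0l : ((l%:R : R) <= t0)%R by rewrite le_max lexx orbT.
have exL : exists n, (fun n => exists (H : finGroupType) (psi : G -> H),
             #|H| = n /\ local_embedding (ball s t0) psi) n.
  have [H [psi hpsi]] := hlef (ball s t0) (finite_ball s t0).
  by exists #|H|, H, psi.
have [H [psi [hcard hpsi]]] := min_natP exL.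
have hEt : forall r, r \in E0 -> ((size r)%:R <= t0)%R.
  move=> r rE; apply: le_trans ht0F; apply: le_trans hF.
  by rewrite ler_nat -hn0 size_normE.
have [phi [hphi hsep]] := core eps0 hd0 t0ge hE0 hval0 hEt hpsi.
apply: (leq_trans (min_nat_le (n := #|{perm H}|) _)).
  exists (perm_of H), phi; split => //.
  move=> g h [u [hu hul]] [v [hv hvl]] heq.
  case: (eqVneq g h) => // hne; exfalso.
  have hul' : ((size u)%:R <= t0)%R by apply: le_trans ht0l.
  have hvl' : ((size v)%:R <= t0)%R by apply: le_trans ht0l.
  have H1 : psi g != psi h.
    apply/eqP => e; move/eqP: hne; apply.
    by apply: hpsi.1 e; [exists u | exists v].
  have H2 : ((size u + size v)%:R * x^-1 <= 1)%R.
    rewrite ler_pdivrMr // mul1r /x ler_nat mul2n -addnn.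
    by apply: leq_add; rewrite -(ler_nat R).
  have := hsep u v hul' hvl'; rewrite hu hv => /(_ H1 H2).
  by rewrite heq eqxx.
rewrite card_permT hcard.
have [hle|hlt] := leP (Fstab s x) (l%:R : R)%R.
  by rewrite /t0 (max_r hle) leq_maxr.
by rewrite /t0 (max_l (ltW hlt)) leq_maxl.
Qed.
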